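(* Let $G$ be an edge-coloured multigraph, $M$ a rainbow matching of maximum size in $G$, $C_0$ the set of colours not used on $M$, $t$ a positive integer, $N$ a $t$-auxiliary matching for $M$, and $M' \subseteq M$ with $|M'| < t/2 - 1$. Then there is no $(C_0 \cup C_N)$-coloured rainbow matching of size $|M'|+1$ which is vertex-disjoint from the matching $\{v_e x_e : e \in M_N \setminus M'\} \cup (M \setminus (M_N \cup M'))$.
   Context: A rainbow matching is a matching whose edges have pairwise distinct colours; an edge is $C$-coloured if its colour lies in $C$. Let $V$ be the vertex set of $G$. For a rainbow matching $M$ with unused colour set $C_0$, a $t$-auxiliary matching for $M$ is a matching $N$ each of whose edges has one endpoint in $V\setminus V(M)$ and the other in $V(M)$, such that for each edge of $N$ its pair of endpoints is joined by edges of at least $t$ distinct colours from $C_0$, and no two edges of $N$ intersect the same edge of $M$. $M_N \subseteq M$ is the set of edges of $M$ intersecting an edge of $N$; for $e \in M_N$, $x_e$ is the endpoint of $e$ lying in $V(N)$, $m(x_e)$ the other endpoint of $e$, and $v_e$ the vertex matched to $x_e$ in $N$. $C_N$ is the set of colours of the edges of $M_N$. *)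

(* Defs.v *)
From mathcomp Require Import all_boot.
Set Implicit Arguments. Unset Strict Implicit. Unset Printing Implicit Defensive.

(* An edge-coloured multigraph is given by finite types V (vertices),
   E (edges, allowing parallel edges) and C (colours), an endpoint map
   [ends : E -> V * V] and a colouring [col : E -> C]. *)
Section Rainbow.
Variables (V E C : finType) (ends : E -> V * V) (col : E -> C).

Definition vx (e : E) : {set V} := [set (ends e).1; (ends e).2].

Definition VM (M : {set E}) : {set V} := \bigcup_(e in M) vx e.

Definition is_matching (M : {set E}) : Prop :=
  forall e f, e \in M -> f \in M -> e != f -> [disjoint vx e & vx f].

Definition rainbow (M : {set E}) : Prop := {in M &, injective col}.

Definition rainbow_matching (M : {set E}) : Prop := is_matching M /\ rainbow M.

Definition coloured_in (M : {set E}) (S : {set C}) : Prop :=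
  forall e, e \in M -> col e \in S.

Definition unused (M : {set E}) : {set C} := ~: (col @: M).

Definition joined_colours (a b : V) : {set C} :=
  [set col e | e in [set e0 : E | vx e0 == [set a; b]]].

(* A t-auxiliary matching N for M, represented as a set of ordered pairs
   (v, x) with v outside V(M) and x in V(M) (so v = v_e, x = x_e). *)
Definition aux_matching (t : nat) (M : {set E}) (N : {set V * V}) : Prop :=
  [/\ forall p, p \in N -> p.1 \notin VM M /\ p.2 \in VM M,
      forall p, p \in N -> t <= #|joined_colours p.1 p.2 :&: unused M|,
      forall p q, p \in N -> q \in N -> p != q ->
        [disjoint [set p.1; p.2] & [set q.1; q.2]] &
      forall p q e, p \in N -> q \in N -> e \in M -> p != q ->
        ~ (p.2 \in vx e /\ q.2 \in vx e)].

Definition M_N (M : {set E}) (N : {set V * V}) : {set E} :=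
  [set e in M | [exists p in N, p.2 \in vx e]].

Definition C_N (M : {set E}) (N : {set V * V}) : {set C} := col @: M_N M N.

(* vertex set of {v_e x_e : e in M_N \ M'} ∪ (M \ (M_N ∪ M')) *)
Definition avoid_set (M M' : {set E}) (N : {set V * V}) : {set V} :=
  (\bigcup_(p in N | [exists e in M_N M N :\: M', p.2 \in vx e]) [set p.1; p.2])
  :|: VM (M :\: (M_N M N :|: M')).

End Rainbow.

(* Main.v *)
Require Import Defs.
From mathcomp Require Import all_boot zify.
Set Implicit Arguments. Unset Strict Implicit. Unset Printing Implicit Defensive.

Lemma cardU_disj (T : finType) (A B : {set T}) :
  [disjoint A & B] -> #|A :|: B| = #|A| + #|B|.
Proof. by move=> d; rewrite cardsU (disjoint_setI0 d) cards0 subn0. Qed.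

Lemma disjP (T : finType) (A B : {set T}) :
  reflect (forall x, x \in A -> x \notin B) [disjoint A & B].
Proof.
rewrite disjoint_subset; apply: (iffP subsetP) => H x xA; have := H x xA;
by rewrite inE.
Qed.

Lemma ndisjP (T : finType) (A B : {set T}) :
  ~~ [disjoint A & B] -> exists x, x \in A /\ x \in B.
Proof.
move=> nd; case: (pickP (fun x => (x \in A) && (x \in B))) => [x /andP[]|none].
  by move=> ??; exists x.
by case/negP: nd; apply/disjP => x xA; apply/negP => xB; have := none x; rewrite xA xB.
Qed.

Lemma card_bigcup_le (I T : finType) (A : {set I}) (F : I -> {set T}) :
  #|\bigcup_(i in A) F i| <= \sum_(i in A) #|F i|.
Proof.
elim/big_rec2: _ => [|i x y _ IH]; first by rewrite cards0.
by rewrite cardsU; apply: leq_trans (leq_subr _ _) _; rewrite leq_add2l.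
Qed.

Lemma cardDle (T : finType) (A X : {set T}) x :
  x \in A -> x \in X -> #|A :\: X| <= #|A|.-1.
Proof.
move=> xA xX; rewrite (cardsD1 x A) xA /=.
apply: subset_leq_card; apply/subsetP => y; rewrite !inE => /andP[yX yA].
by rewrite yA andbT; apply/negP => /eqP eq; subst; rewrite xX in yX.
Qed.

Lemma sdr (I C : finType) (c0 : C) (S : {set I}) (A : I -> {set C}) :
  (forall i, i \in S -> #|S| <= #|A i|) ->
  exists f : I -> C, {in S &, injective f} /\ (forall i, i \in S -> f i \in A i).
Proof.
have [n Hn] : exists n, #|S| <= n by exists #|S|.
elim: n S Hn => [|n IH] S Hn HA.
  exists (fun _ => c0); split => [x y xS|x xS]; by move: Hn; rewrite leqn0 cards_eq0 => /eqP S0; rewrite S0 inE in xS.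
case: (set_0Vmem S) => [->|[i0 i0S]].
  by exists (fun _ => c0); split => [x y|x]; rewrite inE.
have cS : #|S| = #|S :\ i0|.+1 by rewrite (cardsD1 i0 S) i0S.
have H1 : #|S :\ i0| <= n by rewrite -ltnS -cS.
have H2 : forall i, i \in S :\ i0 -> #|S :\ i0| <= #|A i|.
  move=> i; rewrite inE => /andP[_ iS]; apply: leq_trans (leqnSn _) _; rewrite -cS; exact: HA.
have [f' [f'inj f'A]] := IH _ H1 H2.
have : #|f' @: (S :\ i0)| < #|A i0|.
  by apply: leq_trans (HA i0 i0S); rewrite cS ltnS leq_imset_card.
move=> lt.
have : 0 < #|A i0 :\: f' @: (S :\ i0)|.
  by rewrite cardsD subn_gt0; apply: leq_ltn_trans lt; apply: subset_leq_card; apply: subsetIr.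
case/card_gt0P => c; rewrite inE => /andP[cf cA].
exists (fun i => if i == i0 then c else f' i); split.
  move=> x y xS yS /=.
  case: (eqVneq x i0) => [->|xi]; case: (eqVneq y i0) => [->|yi] //.
  - move=> ec; exfalso; move/negP: cf; apply; apply/imsetP; exists y; last by [].
    by rewrite !inE yi.
  - move=> ec; exfalso; move/negP: cf; apply; apply/imsetP; exists x; last by [].
    by rewrite !inE xi.
  - by apply: f'inj; rewrite !inE ?xi ?yi.
move=> i iS /=; case: (eqVneq i i0) => [->|ii] //.
by apply: f'A; rewrite !inE ii.
Qed.

Definition conflict (V E C : finType) (ends : E -> V * V) (col : E -> C)
  (e : E) (R0 : {set E}) : bool :=
  [exists r in R0, ~~ [disjoint vx ends e & vx ends r] || (col e == col r)].

Lemma uniqM (V E C : finType) (ends : E -> V * V) (col : E -> C) (M : {set E}) :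
  rainbow_matching ends col M ->
  forall v e f, e \in M -> f \in M -> v \in vx ends e -> v \in vx ends f -> e = f.
Proof.
move=> [hMm _] v e f eM fM ve vf; apply/eqP; apply/negPn/negP => nef.
by have := disjointFr (hMm e f eM fM nef) ve; rewrite vf.
Qed.

Lemma bnd (V E C : finType) (ends : E -> V * V) (col : E -> C)
  (M R0 D : {set E}) :
  rainbow_matching ends col M -> D \subset M ->
  #|[set e in M :\: D | conflict ends col e R0]| + #|col @: R0 :&: unused col M|
  <= #|VM ends R0 :\: VM ends D| + #|col @: R0 :\: col @: D|.
Proof.
move=> hM sD; have hMr := hM.2.
set Tv := [set e in M :\: D | ~~ [disjoint vx ends e & VM ends R0]].
set Tc := [set e in M :\: D | col e \in col @: R0].
have sT : [set e in M :\: D | conflict ends col e R0] \subset Tv :|: Tc.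
  apply/subsetP => e; rewrite !inE => /andP[eMD /existsP[r /andP[rR /orP[nd|/eqP ce]]]].
    apply/orP; left; rewrite eMD /=; apply/negP => d; case/negP: nd.
    apply/disjP => v ve; apply/negP => vr; have := disjointFr d ve.
    by move/negbT/negP; apply; apply/bigcupP; exists r.
  by apply/orP; right; rewrite eMD /=; apply/imsetP; exists r.
apply: leq_trans (_ : #|Tv| + #|Tc| + #|col @: R0 :&: unused col M| <= _).
  rewrite leq_add2r; apply: leq_trans (subset_leq_card sT) _.
  by rewrite cardsU leq_subr.
rewrite -addnA; apply: leq_add.
  pose h v := [pick e in M | v \in vx ends e].
  have -> : #|Tv| = #|Some @: Tv| by rewrite card_imset //; exact: Some_inj.
  apply: leq_trans (_ : #|h @: (VM ends R0 :\: VM ends D)| <= _); last first.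
    exact: leq_imset_card.
  apply: subset_leq_card; apply/subsetP => o /imsetP[e]; rewrite !inE.
  move=> /andP[/andP[eD eM] nd] ->.
  have [v [ve vR]] := ndisjP nd.
  apply/imsetP; exists v.
    rewrite !inE vR andbT; apply/negP => /bigcupP[d dD vd].
    have := uniqM hM (subsetP sD d dD) eM vd ve; move=> ede; subst.
    by rewrite dD in eD.
  rewrite /h; case: pickP => [e' /andP[e'M ve']|none].
    by congr Some; exact: (uniqM hM eM e'M ve ve').
  by have := none e; rewrite eM ve.
have -> : #|Tc| = #|col @: Tc|.
  rewrite card_in_imset // => x y; rewrite !inE => /andP[/andP[_ xM] _] /andP[/andP[_ yM] _].
  exact: hMr.
rewrite -cardU_disj.
  apply: subset_leq_card; apply/subsetP => c; rewrite !inE => /orP[/imsetP[e]|].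
    rewrite !inE => /andP[/andP[eD eM] ecR] ->; rewrite ecR andbT.
    apply/negP => /imsetP[d dD de]; have := hMr e d eM (subsetP sD d dD) de.
    by move=> ed; subst; rewrite dD in eD.
  move=> /andP[cR cM]; rewrite cR andbT; apply/negP => /imsetP[d dD cd].
  by case/negP: cM; apply/imsetP; exists d => //; exact: (subsetP sD).
apply/disjP => c /imsetP[e]; rewrite !inE => /andP[/andP[_ eM] _] ->.
by rewrite negb_and negbK; apply/orP; right; apply/imsetP; exists e.
Qed.

Lemma gen (V E C : finType) (ends : E -> V * V) (col : E -> C)
  (M : {set E}) (t : nat) (N : {set V * V}) (M' R R0 D : {set E}) :
  rainbow_matching ends col M ->
  (forall Q, rainbow_matching ends col Q -> #|Q| <= #|M|) ->
  aux_matching ends col t M N ->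
  rainbow_matching ends col R ->
  [disjoint VM ends R & avoid_set ends M M' N] ->
  R0 \subset R -> D \subset M -> #|D| < #|R0| ->
  (forall e, e \in M :\: D -> conflict ends col e R0 -> e \in M_N ends M N :\: M') ->
  #|[set e in M :\: D | conflict ends col e R0]| + #|col @: R0 :&: unused col M| <= t ->
  False.
Proof.
move=> hM hmax [hN1 hN2 hN3 hN4] [hRm hRr] hdisj sR0 sD hDR hTsub hbound.
have [hMm hMr] := hM.
move: hbound.
set T := [set e in M :\: D | conflict ends col e R0].
set U := unused col M.
move=> hbound.
set P := [set p in N | [exists e in T, p.2 \in vx ends e]].
have TM : forall e, e \in T -> [/\ e \in M, e \notin D & e \in M_N ends M N :\: M'].
  move=> e; rewrite inE => /andP[eMD ec]; have := hTsub e eMD ec.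
  by move: eMD; rewrite inE => /andP[eD eM] ->.
have PN : forall p, p \in P -> p \in N by move=> p; rewrite inE => /andP[].
have Pavoid : forall p, p \in P -> forall v, v \in [set p.1; p.2] -> v \notin VM ends R0.
  move=> p; rewrite inE => /andP[pN /existsP[e /andP[eT pe]]] v vp.
  have [eM _ eMN] := TM e eT.
  apply/negP => /bigcupP[r rR0 vr].
  have vR : v \in VM ends R by apply/bigcupP; exists r => //; exact: (subsetP sR0).
  have vA : v \in avoid_set ends M M' N.
    rewrite /avoid_set inE; apply/orP; left; apply/bigcupP; exists p => //.
    by rewrite pN /=; apply/existsP; exists e; rewrite eMN pe.
  by rewrite (disjointFr hdisj vR) in vA.
pose h (p : V * V) := [pick e in M | p.2 \in vx ends e].
have hP : forall p, p \in P -> exists2 e, e \in T & h p = Some e /\ p.2 \in vx ends e.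
  move=> p; rewrite inE => /andP[pN /existsP[e /andP[eT pe]]]; exists e => //; split => //.
  have [eM _ _] := TM e eT.
  rewrite /h; case: pickP => [e' /andP[e'M pe']|none].
    by congr Some; exact: (uniqM hM e'M eM pe' pe).
  by have := none e; rewrite eM pe.
have PT : #|P| <= #|T|.
  have -> : #|P| = #|h @: P|.
    rewrite card_in_imset // => p q pP qP hpq; apply/eqP; apply/negPn/negP => npq.
    have [e eT [hpe pe]] := hP p pP; have [e' e'T [hqe qe]] := hP q qP.
    move: hpq; rewrite hpe hqe => -[ee]; subst e'.
    have [eM _ _] := TM e eT.
    by apply: (hN4 p q e (PN p pP) (PN q qP) eM npq).
  have -> : #|T| = #|Some @: T| by rewrite card_imset //; exact: Some_inj.
  apply: subset_leq_card; apply/subsetP => o /imsetP[p pP ->].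
  by have [e eT [-> _]] := hP p pP; apply/imsetP; exists e.
have TP : #|T| <= #|P|.
  have -> : #|T| = #|Some @: T| by rewrite card_imset //; exact: Some_inj.
  apply: leq_trans (leq_imset_card h P); apply: subset_leq_card.
  apply/subsetP => o /imsetP[e eT ->].
  have [eM _ eMN] := TM e eT.
  move: eMN; rewrite !inE => /andP[_ /andP[_ /existsP[p /andP[pN pe]]]].
  have pP : p \in P by rewrite inE pN /=; apply/existsP; exists e; rewrite eT pe.
  apply/imsetP; exists p => //.
  have [e' e'T [-> pe']] := hP p pP.
  have [e'M _ _] := TM e' e'T.
  by congr Some; exact: (uniqM hM eM e'M pe pe').
have [r00 r00R] : exists r, r \in R0.
  by apply/set0Pn; rewrite -card_gt0; apply: leq_ltn_trans hDR.
pose A p := joined_colours ends col p.1 p.2 :&: U :\: (col @: R0).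
have hA : forall p, p \in P -> #|P| <= #|A p|.
  move=> p pP; apply: (leq_trans PT).
  have := hN2 p (PN p pP); rewrite -/U => ht.
  rewrite /A cardsD.
  have : #|joined_colours ends col p.1 p.2 :&: U :&: col @: R0| <= #|col @: R0 :&: U|.
    by apply: subset_leq_card; apply/subsetP => c; rewrite !inE => /andP[/andP[_ ->] ->].
  lia.
have [f [finj fA]] := sdr (col r00) hA.
pose g p := odflt r00 [pick n | (vx ends n == [set p.1; p.2]) && (col n == f p)].
have gP : forall p, p \in P ->
    [/\ vx ends (g p) = [set p.1; p.2], col (g p) = f p, f p \in U & f p \notin col @: R0].
  move=> p pP; have := fA p pP; rewrite /A !inE => /andP[fR /andP[fJ fU]].
  move: fJ => /imsetP[n]; rewrite inE => /eqP vn fn.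
  rewrite /g; case: pickP => [n' /andP[/eqP vn' /eqP fn']|none].
    by split.
  by have := none n; rewrite vn fn !eqxx.
set K := M :\: (D :|: T).
have KP : forall k, k \in K -> [/\ k \in M, k \notin T &
     forall r, r \in R0 -> [disjoint vx ends k & vx ends r] && (col k != col r)].
  move=> k; rewrite !inE negb_or => /andP[/andP[kD kT] kM]; split => //.
  move=> r rR; move: kT; rewrite kD kM /= /conflict.
  by move/existsPn => /(_ r); rewrite rR /= negb_or negbK.
set Q := R0 :|: K :|: g @: P.
pose good x y := [disjoint vx ends x & vx ends y] && (col x != col y).
have goodC : forall x y, good x y -> good y x.
  by move=> x y; rewrite /good disjoint_sym eq_sym.
have gRR : forall x y, x \in R0 -> y \in R0 -> x != y -> good x y.
  move=> x y xR yR xy; have xR' := subsetP sR0 x xR; have yR' := subsetP sR0 y yR.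
  rewrite /good (hRm x y xR' yR' xy) /=; apply/negP => /eqP ce.
  by move/eqP: xy; apply; apply: hRr.
have gKK : forall x y, x \in K -> y \in K -> x != y -> good x y.
  move=> x y /KP[xM _ _] /KP[yM _ _] xy.
  rewrite /good (hMm x y xM yM xy) /=; apply/negP => /eqP ce.
  by move/eqP: xy; apply; apply: hMr.
have gRK : forall x y, x \in R0 -> y \in K -> good x y.
  by move=> x y xR /KP[_ _ H]; apply: goodC; apply: H.
have gRN : forall x p, x \in R0 -> p \in P -> good x (g p).
  move=> x p xR pP; have [vg cg fU fR] := gP p pP.
  rewrite /good vg cg; apply/andP; split.
    rewrite disjoint_sym; apply/disjP => v vp; apply/negP => vx'.
    by have := Pavoid p pP v vp; rewrite (_ : v \in VM ends R0) //; apply/bigcupP; exists x.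
  by apply/negP => /eqP ce; move/negP: fR; apply; apply/imsetP; exists x.
have gKN : forall k p, k \in K -> p \in P -> good k (g p).
  move=> k p /KP[kM kT _] pP; have [vg cg fU fR] := gP p pP.
  rewrite /good vg cg; apply/andP; split.
    rewrite disjoint_sym; apply/disjP => v /set2P[]->.
      have [p1 _] := hN1 p (PN p pP).
      by apply/negP => pk; move/negP: p1; apply; apply/bigcupP; exists k.
    have [e eT [_ pe]] := hP p pP; have [eM _ _] := TM e eT.
    apply/negP => pk; have ek := uniqM hM eM kM pe pk; subst k.
    by rewrite eT in kT.
  apply/negP => /eqP ce; move: fU; rewrite /U /unused inE -ce => /negP; apply.
  by apply/imsetP; exists k.
have gNN : forall p q, p \in P -> q \in P -> g p != g q -> good (g p) (g q).
  move=> p q pP qP gpq; have [vg cg _ _] := gP p pP; have [vg' cg' _ _] := gP q qP.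
  have pq : p != q by apply/negP => /eqP e; subst; rewrite eqxx in gpq.
  rewrite /good vg vg' cg cg' (hN3 p q (PN p pP) (PN q qP) pq) /=.
  by apply/negP => /eqP fe; move/negP: pq; apply; apply/eqP; apply: finj.
have Qcase : forall x, x \in Q -> [\/ x \in R0, x \in K | exists2 p, p \in P & x = g p].
  move=> x; rewrite /Q !in_setU => /orP[/orP[xR|xK]|/imsetP[p pP ->]].
  - by constructor 1.
  - by constructor 2.
  - by constructor 3; exists p.
have Qgood : forall x y, x \in Q -> y \in Q -> x != y -> good x y.
  move=> x y /Qcase[xR|xK|[p pP ->]] /Qcase[yR|yK|[q qP ->]] xy.
  - exact: gRR.
  - exact: gRK.
  - exact: gRN.
  - exact: goodC (gRK _ _ yR xK).
  - exact: gKK.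
  - exact: gKN.
  - exact: goodC (gRN _ _ yR pP).
  - exact: goodC (gKN _ _ yK pP).
  - exact: gNN.
have QR : rainbow_matching ends col Q.
  split.
    by move=> x y xQ yQ xy; have /andP[] := Qgood x y xQ yQ xy.
  move=> x y xQ yQ ce; apply/eqP; apply/negPn/negP => xy.
  by have /andP[_] := Qgood x y xQ yQ xy; rewrite ce eqxx.
have := hmax Q QR.
have d1 : [disjoint R0 & K].
  apply/disjP => x xR; apply/negP => /KP[_ _ H]; have := H x xR.
  by rewrite eqxx andbF.
have d2 : [disjoint R0 :|: K & g @: P].
  apply/disjP => x xRK; apply/negP => /imsetP[p pP ex]; subst x.
  have [vg _ _ _] := gP p pP.
  have p1 : p.1 \in vx ends (g p) by rewrite vg !inE eqxx.
  move: xRK; rewrite inE => /orP[gR|/KP[gM _ _]].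
    by have := Pavoid p pP p.1; rewrite !inE eqxx /= => /(_ isT) /negP; apply; apply/bigcupP; exists (g p).
  have [np1 _] := hN1 p (PN p pP).
  by move/negP: np1; apply; apply/bigcupP; exists (g p).
have cg : #|g @: P| = #|P|.
  rewrite card_in_imset // => p q pP qP gpq.
  have [_ cg1 _ _] := gP p pP; have [_ cg2 _ _] := gP q qP.
  by apply: finj; rewrite // -cg1 -cg2 gpq.
have dDT : [disjoint D & T].
  by apply/disjP => x xD; apply/negP => /TM[_ xnD _]; rewrite xD in xnD.
have sDT : D :|: T \subset M.
  by apply/subsetP => x; rewrite inE => /orP[/(subsetP sD)//|/TM[]].
have cK : #|K| = #|M| - (#|D| + #|T|) by rewrite /K cardsDS // cardU_disj.
have cDT : #|D| + #|T| <= #|M| by rewrite -cardU_disj //; exact: subset_leq_card.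
rewrite /Q (cardU_disj d2) (cardU_disj d1) cK cg.
lia.
Qed.

Theorem lemma2p5 (V E C : finType) (ends : E -> V * V) (col : E -> C)
  (loopless : forall e, (ends e).1 != (ends e).2)
  (M : {set E}) (t : nat) (N : {set V * V}) (M' : {set E}) :
  rainbow_matching ends col M ->
  (forall R : {set E}, rainbow_matching ends col R -> #|R| <= #|M|) ->
  0 < t ->
  aux_matching ends col t M N ->
  M' \subset M ->
  (* |M'| < t/2 - 1 *)
  #|M'|.*2 + 2 < t ->
  ~ (exists R : {set E},
       [/\ rainbow_matching ends col R,
           coloured_in col R (unused col M :|: C_N ends col M N),
           #|R| = #|M'|.+1 &
           [disjoint VM ends R & avoid_set ends M M' N]]).
Proof.
move=> hM hmax t0 haux sM' hsize [R [hR hcol hcard hdisj]].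
have hMr := hM.2.
have notMN : forall e r, e \in M -> e \notin M_N ends M N -> e \notin M' -> r \in R ->
    [disjoint vx ends e & vx ends r] && (col e != col r).
  move=> e r eM eN eM' rR; apply/andP; split.
    apply/disjP => v ve; apply/negP => vr.
    have vR : v \in VM ends R by apply/bigcupP; exists r.
    have vA : v \in avoid_set ends M M' N.
      rewrite /avoid_set in_setU; apply/orP; right; apply/bigcupP; exists e => //.
      by rewrite in_setD in_setU negb_or eN eM' eM.
    by rewrite (disjointFr hdisj vR) in vA.
  apply/negP => /eqP ce; have := hcol r rR; rewrite in_setU -ce => /orP[].
    by rewrite /unused inE => /negP; apply; apply/imsetP; exists e.
  move=> /imsetP[f fN cf]; have fM : f \in M by move: fN; rewrite inE => /andP[].
  by have := hMr e f eM fM cf => ef; subst f; rewrite fN in eN.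
have sizeBnd : forall r, #|vx ends r| <= 2.
  by move=> r; rewrite /vx cards2; case: (_ != _).
case: (boolP [forall r in R, ~~ [disjoint vx ends r & VM ends M'] || (col r \in col @: M')]).
  move/forall_inP => touch.
  apply: (gen hM hmax haux hR hdisj (subxx R) sM').
  - by rewrite hcard.
  - move=> e; rewrite in_setD => /andP[eM' eM] /existsP[r /andP[rR cr]].
    rewrite in_setD eM'/=; apply/negPn/negP => eN.
    case/andP: (notMN e r eM eN eM' rR) => d ce.
    by move: cr; rewrite d /= (negbTE ce).
  - apply: leq_trans (bnd R hM sM') _.
    apply: leq_trans (_ : \sum_(r in R) (#|vx ends r :\: VM ends M'| + #|[set col r] :\: col @: M'|) <= _).
      rewrite big_split /=; apply: leq_add.
        apply: leq_trans (card_bigcup_le _ _); apply: subset_leq_card.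
        apply/subsetP => v; rewrite in_setD => /andP[vM /bigcupP[r rR vr]].
        by apply/bigcupP; exists r => //; rewrite in_setD vM.
      apply: leq_trans (card_bigcup_le _ _); apply: subset_leq_card.
      apply/subsetP => c; rewrite in_setD => /andP[cM /imsetP[r rR ce]]; subst c.
      by apply/bigcupP; exists r => //; rewrite in_setD cM set11.
    apply: leq_trans (_ : \sum_(r in R) 2 <= _).
      apply: leq_sum => r rR; have := touch r rR.
      case/orP => [nd|cM].
        have [v [vr vM]] := ndisjP nd.
        have := cardDle vr vM; have := sizeBnd r.
        have : #|[set col r] :\: col @: M'| <= 1 by rewrite -(cards1 (col r)); apply: subset_leq_card; apply: subsetDl.
        lia.
      have := cardDle (set11 (col r)) cM; rewrite cards1 /=.
      have := sizeBnd r; have := subset_leq_card (subsetDl (vx ends r) (VM ends M')).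
      lia.
    rewrite sum_nat_const hcard; move: hsize; rewrite -addnn; lia.
move/forall_inPn => [r rR]; rewrite negb_or negbK => /andP[dr cr].
apply: (gen (R0 := [set r]) (D := set0) hM hmax haux hR hdisj).
- by rewrite sub1set.
- exact: sub0set.
- by rewrite cards0 cards1.
- move=> e; rewrite setD0 => eM /existsP[r' /andP[]]; rewrite in_set1 => /eqP -> cr'.
  case: (boolP (e \in M')) => eM'.
    exfalso; move: cr'; case/orP.
      move/ndisjP => [v [ve vr]]; have := disjointFr dr vr.
      by move/negbT/negP; apply; apply/bigcupP; exists e.
    move/eqP => ce; move/negP: cr; apply; apply/imsetP; exists e => //.
  rewrite in_setD eM' /=; apply/negPn/negP => eN.
  case/andP: (notMN e r eM eN eM' rR) => d ce.
  by move: cr'; rewrite d /= (negbTE ce).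
- apply: leq_trans (bnd [set r] hM (sub0set M)) _.
  have : #|VM ends [set r] :\: VM ends set0| <= 2.
    apply: leq_trans (subset_leq_card (subsetDl _ _)) _.
    by rewrite /VM big_set1.
  have : #|col @: [set r] :\: col @: set0| <= 1.
    apply: leq_trans (subset_leq_card (subsetDl _ _)) _.
    by rewrite imset_set1 cards1.
  move: hsize; lia.
Qed.
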